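(* Fix an iteration $k$, a current policy $\pi_k$, and a function $M_k:\mathcal Q\to(0,\infty)$. Define \[ L^{\mathrm{Nat}}_{\pi_k}(\pi(\cdot\mid q))=\mathbb E_{o\sim\pi(\cdot\mid q)}\Bigl[\frac{r^*(q,o)-\mathbb E_{o'\sim\pi_k(\cdot\mid q)}[r^*(q,o')]}{M_k(q)}\Bigr]. \] Then for every policy $\pi$, \[ \mathbb{E}_{q\sim\rho_{\mathcal Q}}\bigl[p_{\pi}(q)-p_{\pi_k}(q)\bigr] \ge \mathbb{E}_{q\sim\rho_{\mathcal Q}}\bigl[L^{\mathrm{Nat}}_{\pi_k}(\pi(\cdot\mid q))\bigr] -2\sqrt{\mathbb{E}_{q\sim\rho_{\mathcal Q}}\Bigl(\tfrac{1-M_k(q)}{M_k(q)}\Bigr)^2}\; \sqrt{\mathbb{E}_{q\sim\rho_{\mathcal Q}}\mathrm{TV}^2\bigl(\pi(\cdot\mid q)\,\|\,\pi_k(\cdot\mid q)\bigr)}. \]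
   Context: Setting: $\mathcal Q$ is a set of prompts with a probability distribution $\rho_{\mathcal Q}$; $\mathcal O$ is a countable set of responses; $r^*:\mathcal Q\times\mathcal O\to\{0,1\}$ is the true binary reward. A policy $\pi$ assigns to each $q$ a distribution $\pi(\cdot\mid q)$ on $\mathcal O$; $p_\pi(q)=\mathbb E_{o\sim\pi(\cdot\mid q)}[r^*(q,o)]$. $\mathrm{TV}(P,Q)=\sup_A|P(A)-Q(A)|$ is the total variation distance. *)

(* Defs.v *)
From HB Require Import structures.
From mathcomp Require Import all_boot all_order all_algebra.
From mathcomp Require Import all_classical all_reals all_analysis.
Set Implicit Arguments. Unset Strict Implicit. Unset Printing Implicit Defensive.
Import Order.TTheory GRing.Theory Num.Theory.
Local Open Scope classical_set_scope.
Local Open Scope ring_scope.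
Local Open Scope ereal_scope.

Section discrete.
Context {R : realType} {O : countType}.

Definition is_pmf (mu : O -> R) : Prop :=
  (forall o, (0 <= mu o)%R) /\ \esum_(o in [set: O]) (mu o)%:E = 1.

Definition dprob (mu : O -> R) (A : set O) : \bar R :=
  \esum_(o in A) (mu o)%:E.

Definition dexp (mu : O -> R) (f : O -> R) : \bar R :=
  \esum_(o in [set: O]) (Num.max (mu o * f o) 0)%:E
  - \esum_(o in [set: O]) (Num.max (- (mu o * f o)) 0)%:E.

Definition TV (mu nu : O -> R) : \bar R :=
  ereal_sup [set `| dprob mu A - dprob nu A | | A in [set: set O]].
End discrete.

Definition is_policy {d} {Q : measurableType d} {R : realType} {O : countType}
  (pi : Q -> O -> R) : Prop :=
  (forall q, is_pmf (pi q)) /\ (forall o, measurable_fun [set: Q] (fun q => pi q o)).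

Definition p_succ {d} {Q : measurableType d} {R : realType} {O : countType}
  (r : Q -> O -> R) (pi : Q -> O -> R) (q : Q) : \bar R :=
  dexp (pi q) (r q).

Definition L_Nat {d} {Q : measurableType d} {R : realType} {O : countType}
  (r : Q -> O -> R) (pik : Q -> O -> R) (M : Q -> R) (pi : Q -> O -> R) (q : Q)
  : \bar R :=
  dexp (pi q) (fun o => ((r q o - fine (dexp (pik q) (r q))) / M q)%R).

(* Main.v *)
Require Import Defs.
From HB Require Import structures.
From mathcomp Require Import all_boot all_order all_algebra.
From mathcomp Require Import all_classical all_reals all_analysis.
From mathcomp Require Import ring lra.
From mathcomp Require Import measurable_realfun.
Import Order.TTheory GRing.Theory Num.Theory.
Local Open Scope classical_set_scope.
Local Open Scope ring_scope.
Local Open Scope ereal_scope.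

Section disc.
Context {R : realType} {O : countType}.

Definition ser (a : O -> \bar R) (n : nat) : \bar R :=
  if pickle_inv n is Some o then a o else 0.

Lemma esum_ser (a : O -> \bar R) : (forall o, 0 <= a o) ->
  \esum_(o in [set: O]) a o = \sum_(n <oo) ser a n.
Proof.
move=> a0.
have b0 : forall n, 0 <= ser a n by move=> n; rewrite /ser; case: pickle_inv.
rewrite nneseries_esumT // (@esumID _ _ (range (@pickle O)) setT); last by [].
rewrite [X in _ + X]esum1 ?adde0; last first.
  move=> n [_ nr]; rewrite /ser; move: (@pickle_invK O n).
  case: (pickle_inv n) => // o /= E.
  by exfalso; apply: nr; exists o.
rewrite setTI esum_image; last by move=> x y _ _; exact: (pcan_inj (@pickleK_inv O)).
by apply: eq_esum => o _; rewrite /ser pickleK_inv.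
Qed.

Lemma esumZ (k : R) (a : O -> \bar R) : (0 <= k)%R -> (forall o, 0 <= a o) ->
  \esum_(o in [set: O]) (k%:E * a o) = k%:E * \esum_(o in [set: O]) a o.
Proof.
move=> k0 a0; rewrite !esum_ser //; last by move=> o; rewrite mule_ge0.
rewrite -nneseriesZl; last by move=> n _; rewrite /ser; case: pickle_inv.
by apply: eq_eseriesr => n _; rewrite /ser; case: pickle_inv => //; rewrite mule0.
Qed.


Definition Sx (mu rr : O -> R) := \esum_(o in [set: O]) (mu o * rr o)%:E.

Variables (mu rr : O -> R).
Hypothesis hmu : is_pmf mu.
Hypothesis hr : forall o, rr o = 0%R \/ rr o = 1%R.

Let mu0 o : (0 <= mu o)%R. Proof. by case: hmu. Qed.
Let r0 o : (0 <= rr o)%R. Proof. by case: (hr o) => ->. Qed.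
Let r1 o : (rr o <= 1)%R. Proof. by case: (hr o) => ->. Qed.

Lemma Sx_ge0 : 0 <= Sx mu rr.
Proof. by apply: esum_ge0 => o _; rewrite lee_fin mulr_ge0. Qed.

Lemma Sx_le1 : Sx mu rr <= 1.
Proof.
case: hmu => _ <-; apply: le_esum => o _; rewrite lee_fin.
by rewrite ler_piMr.
Qed.

Lemma Sx_fin : Sx mu rr = (fine (Sx mu rr))%:E.
Proof.
rewrite fineK // ge0_fin_numE ?Sx_ge0 //.
by apply: (le_lt_trans Sx_le1); rewrite ltry.
Qed.

Lemma fine_Sx_ge0 : (0 <= fine (Sx mu rr))%R.
Proof. by rewrite -lee_fin -Sx_fin Sx_ge0. Qed.

Lemma fine_Sx_le1 : (fine (Sx mu rr) <= 1)%R.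
Proof. by rewrite -lee_fin -Sx_fin Sx_le1. Qed.

Lemma dexp_r : dexp mu rr = Sx mu rr.
Proof.
rewrite /dexp (@esum1 _ _ _ (fun o => (Num.max (- (mu o * rr o)) 0)%:E)).
  rewrite sube0; apply: eq_esum => o _.
  by rewrite max_l // mulr_ge0.
by move=> o _; rewrite max_r // oppr_le0 mulr_ge0.
Qed.

Lemma Sx_compl : \esum_(o in [set: O]) (mu o * (1 - rr o))%:E = 1 - Sx mu rr.
Proof.
have : 1 = Sx mu rr + \esum_(o in [set: O]) (mu o * (1 - rr o))%:E.
  case: hmu => _ <-; rewrite /Sx -esumD.
  - by apply: eq_esum => o _; rewrite -EFinD -mulrDr addrC subrK mulr1.
  - by move=> o _; rewrite lee_fin mulr_ge0.
  - by move=> o _; rewrite lee_fin mulr_ge0 // subr_ge0.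
rewrite Sx_fin => ->; rewrite addeC addeK //.
Qed.

Lemma dexp_L (a c : R) : (0 <= a <= 1)%R -> (0 < c)%R ->
  dexp mu (fun o => (rr o - a) / c)%R = ((fine (Sx mu rr) - a) / c)%:E.
Proof.
move=> /andP[a0 a1] c0.
rewrite /dexp.
rewrite (eq_esum (b := fun o => ((1 - a) / c)%:E * (mu o * rr o)%:E)); last first.
  move=> o _; rewrite -EFinM; congr EFin.
  case: (hr o) => ->.
    rewrite !mulr0 max_r //; apply: mulr_ge0_le0 => //.
    apply: mulr_le0_ge0; first by rewrite sub0r oppr_le0.
    by rewrite invr_ge0 ltW.
  rewrite mulr1 max_l; first by rewrite mulrC.
  by rewrite mulr_ge0 // divr_ge0 ?subr_ge0 // ltW.
rewrite (eq_esum (I := [set: O]) (a := fun o => (Num.max (- (mu o * ((rr o - a) / c))) 0)%:E)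
  (b := fun o => (a / c)%:E * (mu o * (1 - rr o))%:E)); last first.
  move=> o _; rewrite -EFinM; congr EFin.
  case: (hr o) => ->.
    rewrite subr0 mulr1 max_l; first by rewrite sub0r mulNr mulrN opprK mulrC.
    by rewrite sub0r mulNr mulrN opprK mulr_ge0 // divr_ge0 // ltW.
  rewrite subrr !mulr0 max_r // oppr_le0; apply: mulr_ge0 => //.
  by apply: divr_ge0; [rewrite subr_ge0 | exact: ltW].
rewrite esumZ; last by move=> o; rewrite lee_fin mulr_ge0.
  2: by rewrite divr_ge0 ?subr_ge0 // ltW.
rewrite esumZ; last by move=> o; rewrite lee_fin mulr_ge0 // subr_ge0.
  2: by rewrite divr_ge0 // ltW.
rewrite Sx_compl.
have E : \esum_(o in [set: O]) (mu o * rr o)%:E = (fine (Sx mu rr))%:E := Sx_fin.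
rewrite E; set s := fine (Sx mu rr); rewrite Sx_fin -/s.
have -> : (1 - s%:E) = (1 - s)%:E by [].
rewrite -EFinM; rewrite -EFinM -EFinB; congr EFin.
by field; rewrite gt_eqF.
Qed.

Lemma dprob_Sx : dprob mu [set o | rr o = 1%R] = Sx mu rr.
Proof.
rewrite /dprob esum_mkcond; apply: eq_esum => o _.
case: (hr o) => E; rewrite E.
  by rewrite mulr0 ifF //; apply/negbTE/negP; rewrite inE /= E => /eqP; rewrite eq_sym oner_eq0.
by rewrite mulr1 ifT // inE.
Qed.

End disc.

Lemma ge0_le_integral_nm d (Q : measurableType d) (R : realType)
  (mu : {measure set Q -> \bar R}) (f g : Q -> \bar R) :
  (forall x, 0 <= f x) -> (forall x, f x <= g x) ->
  \int[mu]_x f x <= \int[mu]_x g x.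
Proof.
move=> f0 fg.
rewrite !ge0_integralTE //; last by move=> x; exact: le_trans (f0 x) (fg x).
apply: ge_ereal_sup => _ [h hf <-]; apply: ereal_sup_ubound; exists h => //.
by move=> x; exact: le_trans (hf x) (fg x).
Qed.

Section abs.
Context d (Q : measurableType d) (R : realType) (rho : probability Q R).
Variables (s1 s2 m : Q -> R) (T : Q -> \bar R).
Hypotheses (ms1 : measurable_fun setT s1) (ms2 : measurable_fun setT s2)
  (mm : measurable_fun setT m).
Hypotheses (s10 : forall q, (0 <= s1 q <= 1)%R) (s20 : forall q, (0 <= s2 q <= 1)%R)
  (m0 : forall q, (0 < m q)%R) (hT : forall q, (`|s1 q - s2 q|)%:E <= T q).

Let D := fun q => (s1 q - s2 q)%R.
Let g := fun q => ((1 - m q) / m q)%R.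

Let mD : measurable_fun setT D.
Proof. exact: measurable_funB. Qed.

Let mg : measurable_fun setT g.
Proof.
apply: measurable_funM; first exact: measurable_funB.
have -> : (fun q => (m q)^-1)%R = (fun q => m q `^ (-1))%R.
  by apply/funext => q; rewrite powR_inv1 // ltW.
exact: measurableT_comp (measurable_powR _) mm.
Qed.

Let Dle1 q : (`|D q| <= 1)%R.
Proof.
have := s10 q; have := s20 q; rewrite /D => /andP[? ?] /andP[? ?].
by rewrite ler_norml; apply/andP; split; lra.
Qed.

Let intD : rho.-integrable setT (EFin \o D).
Proof.
apply: (le_integrable _ _ _ (finite_measure_integrable_cst _ 1%R _)) => //.
- exact/measurable_EFinP.
- by move=> q _; change (`|D q|%:E <= `|1%R|%:E); rewrite lee_fin normr1 Dle1.
Qed.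

Let N2 (f : Q -> R) : 'N[rho]_2%:E[EFin \o f] = sqrte (\int[rho]_q (f q ^+ 2)%:E).
Proof.
rewrite unlock poweR12_sqrt; last by apply: integral_ge0 => q _; exact: poweR_ge0.
congr sqrte; apply: eq_integral => q _.
by rewrite /= powR_mulrn ?normr_ge0 // real_normK // num_real.
Qed.

Let hold : \int[rho]_q `|(D q * g q)%:E| <=
  sqrte (\int[rho]_q (D q ^+ 2)%:E) * sqrte (\int[rho]_q (g q ^+ 2)%:E).
Proof.
have h2 : (0 < 2 :> R)%R by [].
have := @hoelder _ _ _ rho D g 2 2 mD mg h2 h2.
rewrite Lnorm1 !N2; apply.
by rewrite -[X in (X + _)%R]mul1r -[X in (_ + X)%R]mul1r -splitr.
Qed.

Let C : \int[rho]_q (D q ^+ 2)%:E <= \int[rho]_q (T q) ^+ 2.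
Proof.
apply: ge0_le_integral_nm => q; first by rewrite lee_fin sqr_ge0.
have T0 : 0 <= T q by exact: le_trans (hT q).
rewrite -real_normK ?num_real // EFinM -expe2 lee_sqr //.
  exact: hT.
Qed.

Lemma main_abs :
  \int[rho]_q (D q)%:E >=
  \int[rho]_q (D q / m q)%:E
  - 2%:E * sqrte (\int[rho]_q (g q ^+ 2)%:E)
         * sqrte (\int[rho]_q (T q) ^+ 2).
Proof.
rewrite -muleA.
set P := sqrte _ * sqrte _.
have NP : \int[rho]_q `|(D q * g q)%:E| <= P.
  apply: le_trans hold _; rewrite /P muleC.
  apply: lee_wpmul2l; first exact: sqrte_ge0.
  rewrite lee_sqrt ?C //.
  by apply: integral_ge0 => q _; rewrite sqre_ge0.
have P0 : 0 <= P by rewrite /P mule_ge0 // sqrte_ge0.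
case EP: P P0 NP => [p| |] // P0 NP; last first.
  by rewrite mulry gtr0_sg // mul1e addeNy leNye.
have ig : rho.-integrable setT (fun q => (D q * g q)%:E).
  apply/integrableP; split.
    by apply/measurable_EFinP; exact: measurable_funM.
  by apply: le_lt_trans NP _; rewrite ltry.
have -> : \int[rho]_q (D q / m q)%:E =
    \int[rho]_q (D q)%:E + \int[rho]_q (D q * g q)%:E.
  rewrite -integralD //; apply: eq_integral => q _; rewrite -EFinD; congr EFin.
  by rewrite /g; field; rewrite gt_eqF.
have fX := integrable_fin_num measurableT intD.
have fI := integrable_fin_num measurableT ig.
have Ile : \int[rho]_q (D q * g q)%:E <= p%:E.
  apply: le_trans (lee_abs _) _; apply: le_trans NP.
  apply: le_abse_integral => //.
  by apply/measurable_EFinP; exact: measurable_funM.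
move: Ile; rewrite -(fineK fX) -(fineK fI).
set x := fine _; set y := fine _.
move=> Ile.
have -> : y%:E + x%:E - 2%:E * p%:E = (y + x - 2 * p)%:E by [].
move: Ile; rewrite !lee_fin => Ile.
move: P0; rewrite lee_fin => P0; lra.
Qed.
End abs.


Lemma Sx_meas d (Q : measurableType d) (R : realType) (O : countType)
  (pi r : Q -> O -> R) :
  (forall o, measurable_fun setT (fun q => pi q o)) ->
  (forall o, measurable_fun setT (fun q => r q o)) ->
  (forall q o, (0 <= pi q o * r q o)%R) ->
  measurable_fun setT (fun q => Sx (pi q) (r q)).
Proof.
move=> mpi mr h0.
have -> : (fun q => Sx (pi q) (r q)) =
    (fun q => \sum_(n <oo) ser (fun o => (pi q o * r q o)%:E) n).
  by apply/funext => q; rewrite /Sx esum_ser // => o; rewrite lee_fin.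
apply: (@ge0_emeasurable_sum _ _ _ setT (fun n q => ser (fun o => (pi q o * r q o)%:E) n) xpredT).
  by move=> n q _ _; rewrite /ser; case: pickle_inv => // o; rewrite lee_fin.
move=> n _; rewrite /ser; case: pickle_inv; last exact: measurable_cst.
by move=> o; apply/measurable_EFinP; exact: measurable_funM.
Qed.

Theorem theorem5 (R : realType) (d : measure_display) (Q : measurableType d)
  (rho : probability Q R) (O : countType)
  (r : Q -> O -> R)
  (hr01 : forall q o, r q o = 0%R \/ r q o = 1%R)
  (hrmeas : forall o, measurable_fun [set: Q] (fun q => r q o))
  (pik : Q -> O -> R) (hpik : is_policy pik)
  (M : Q -> R) (hMpos : forall q, (0 < M q)%R)
  (hMmeas : measurable_fun [set: Q] M)
  (pi : Q -> O -> R) (hpi : is_policy pi) :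
  \int[rho]_q (p_succ r pi q - p_succ r pik q) >=
  \int[rho]_q L_Nat r pik M pi q
  - 2%:E * sqrte (\int[rho]_q (((1 - M q) / M q) ^+ 2)%:E)
         * sqrte (\int[rho]_q (TV (pi q) (pik q)) ^+ 2).
Proof.
case: hpi => hp mp; case: hpik => hk mk.
have nn (mu : Q -> O -> R) : (forall q, is_pmf (mu q)) ->
    forall q o, (0 <= mu q o * r q o)%R.
  move=> h q o; apply: mulr_ge0; first by case: (h q).
  by case: (hr01 q o) => ->.
pose s1 q := fine (Sx (pi q) (r q)).
pose s2 q := fine (Sx (pik q) (r q)).
have ms (mu : Q -> O -> R) : (forall q, is_pmf (mu q)) ->
    (forall o, measurable_fun setT (fun q => mu q o)) ->
    measurable_fun setT (fun q => fine (Sx (mu q) (r q))).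
  move=> h hm; apply/measurable_EFinP.
  have -> : (EFin \o (fun q => fine (Sx (mu q) (r q)))) = (fun q => Sx (mu q) (r q)).
    by apply/funext => q /=; rewrite -Sx_fin.
  exact: Sx_meas (nn _ h).
have E1 : (fun q => p_succ r pi q - p_succ r pik q) = (fun q => (s1 q - s2 q)%:E).
  apply/funext => q; rewrite /p_succ !dexp_r // [Sx (pi q) _]Sx_fin //.
  by rewrite [Sx (pik q) _]Sx_fin.
have E2 : L_Nat r pik M pi = (fun q => ((s1 q - s2 q) / M q)%:E).
  apply/funext => q; rewrite /L_Nat (@dexp_r _ _ (pik q) (r q)) // dexp_L //.
  by apply/andP; split; [exact: fine_Sx_ge0 | exact: fine_Sx_le1].
rewrite E1 E2.
apply: (@main_abs _ _ _ rho s1 s2 M (fun q => TV (pi q) (pik q))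
   (ms _ hp mp) (ms _ hk mk) hMmeas _ _ hMpos).
- by move=> q; apply/andP; split; [exact: fine_Sx_ge0 | exact: fine_Sx_le1].
- by move=> q; apply/andP; split; [exact: fine_Sx_ge0 | exact: fine_Sx_le1].
- move=> q; apply: ereal_sup_ubound; exists [set o | r q o = 1%R]; first by [].
  rewrite !dprob_Sx // (@Sx_fin _ _ _ _ (hp q) (hr01 q)) (@Sx_fin _ _ _ _ (hk q) (hr01 q)).
  by rewrite -EFinB.
Qed.
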